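(* If $R \in \mathcal{R}$, then (1) $R \subseteq \mathcal{N}$, and (2) $R$ contains every $\lambda$-variable.
   Context: With disjoint sets of $\lambda$-variables $x,y,\dots$ and $\mu$-variables $a,b,\dots$, terms and $\mathcal{E}$-terms are $\mathcal{T} ::= x \mid \lambda x.\mathcal{T} \mid (\mathcal{T}\;\mathcal{E}) \mid \langle \mathcal{T},\mathcal{T}\rangle \mid \omega_1\mathcal{T} \mid \omega_2\mathcal{T} \mid \mu a.\mathcal{T} \mid (a\;\mathcal{T})$, $\mathcal{E} ::= \mathcal{T} \mid \pi_1 \mid \pi_2 \mid [x.\mathcal{T}, y.\mathcal{T}]$ (up to renaming of bound variables). The one-step reduction $\triangleright$ is the closure under all constructors of: $(\lambda x.u\;v)\triangleright u[x:=v]$; $(\langle t_1,t_2\rangle\;\pi_i)\triangleright t_i$; $(\omega_i t\;[x_1.u_1,x_2.u_2])\triangleright u_i[x_i:=t]$; $((t\;[x_1.u_1,x_2.u_2])\;\varepsilon)\triangleright(t\;[x_1.(u_1\;\varepsilon),x_2.(u_2\;\varepsilon)])$; $(\mu a.t\;\varepsilon)\triangleright\mu a.t[a:=^*\varepsilon]$, where $t[a:=^*\varepsilon]$ replaces inductively each subterm $(a\;v)$ by $(a\;(v\;\varepsilon))$. $\mathcal{N}$ is the set of strongly normalizable terms (no infinite $\triangleright$-reduction sequence). For sets $K,L$ of terms define: $K\to L=\{t\in\mathcal{T} : (t\;u)\in L \text{ for all } u\in K\}$; $K\wedge L=\{t\in\mathcal{T} : (t\;\pi_1)\in K \text{ and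 } (t\;\pi_2)\in L\}$; $K\vee L=\{t\in\mathcal{T} :$ for all $\lambda$-variables $x,y$ and all $u,v\in\mathcal{N}$, if $u[x:=r]\in\mathcal{N}$ and $v[y:=s]\in\mathcal{N}$ for all $r\in K$, $s\in L$, then $(t\;[x.u,y.v])\in\mathcal{N}\}$. The set $\mathcal{R}$ of reducibility candidates is the smallest set of sets of terms containing $\mathcal{N}$ and closed under $\to$, $\wedge$, $\vee$. *)

(* Defs.v *)
(* Two independent de Bruijn index spaces: lambda-variables (Var n, bound by
   Lam and by the two branches of Case) and mu-variables (MApp a t, bound by Mu). *)
From Stdlib Require Import Arith.

Inductive term : Type :=
| Var  : nat -> term
| Lam  : term -> term
| App  : term -> eterm -> term
| Pair : term -> term -> term
| Inj1 : term -> term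
| Inj2 : term -> term
| Mu   : term -> term
| MApp : nat -> term -> term
with eterm : Type :=
| ETm   : term -> eterm
| Proj1 : eterm
| Proj2 : eterm
| Case  : term -> term -> eterm.     (* [x.u, y.v] : binds one lambda-var in each *)

Definition up (r : nat -> nat) : nat -> nat :=
  fun n => match n with 0 => 0 | S n => S (r n) end.

Fixpoint ren (xr mr : nat -> nat) (t : term) : term :=
  match t with
  | Var n => Var (xr n)
  | Lam t => Lam (ren (up xr) mr t)
  | App t e => App (ren xr mr t) (eren xr mr e)
  | Pair t1 t2 => Pair (ren xr mr t1) (ren xr mr t2)
  | Inj1 t => Inj1 (ren xr mr t)
  | Inj2 t => Inj2 (ren xr mr t)
  | Mu t => Mu (ren xr (up mr) t)
  | MApp a t => MApp (mr a) (ren xr mr t)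
  end
with eren (xr mr : nat -> nat) (e : eterm) : eterm :=
  match e with
  | ETm t => ETm (ren xr mr t)
  | Proj1 => Proj1
  | Proj2 => Proj2
  | Case u v => Case (ren (up xr) mr u) (ren (up xr) mr v)
  end.

Definition lshift (t : term) : term := ren S (fun n => n) t.
Definition mshift (t : term) : term := ren (fun n => n) S t.
Definition elshift (e : eterm) : eterm := eren S (fun n => n) e.
Definition emshift (e : eterm) : eterm := eren (fun n => n) S e.

Definition upS (s : nat -> term) : nat -> term :=
  fun n => match n with 0 => Var 0 | S n => lshift (s n) end.

Fixpoint subst (s : nat -> term) (t : term) : term :=
  match t with
  | Var n => s n
  | Lam t => Lam (subst (upS s) t)
  | App t e => App (subst s t) (esubst s e)
  | Pair t1 t2 => Pair (subst s t1) (subst s t2)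
  | Inj1 t => Inj1 (subst s t)
  | Inj2 t => Inj2 (subst s t)
  | Mu t => Mu (subst (fun n => mshift (s n)) t)
  | MApp a t => MApp a (subst s t)
  end
with esubst (s : nat -> term) (e : eterm) : eterm :=
  match e with
  | ETm t => ETm (subst s t)
  | Proj1 => Proj1
  | Proj2 => Proj2
  | Case u v => Case (subst (upS s) u) (subst (upS s) v)
  end.

Definition scons (v : term) : nat -> term :=
  fun n => match n with 0 => v | S n => Var n end.
Definition subst1 (u v : term) : term := subst (scons v) u.

Fixpoint msub (a : nat) (e : eterm) (t : term) : term :=
  match t with
  | Var n => Var n
  | Lam t => Lam (msub a (elshift e) t)
  | App t e' => App (msub a e t) (emsub a e e')
  | Pair t1 t2 => Pair (msub a e t1) (msub a e t2)
  | Inj1 t => Inj1 (msub a e t)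
  | Inj2 t => Inj2 (msub a e t)
  | Mu t => Mu (msub (S a) (emshift e) t)
  | MApp b v => if Nat.eqb b a then MApp b (App (msub a e v) e)
                else MApp b (msub a e v)
  end
with emsub (a : nat) (e : eterm) (e' : eterm) : eterm :=
  match e' with
  | ETm t => ETm (msub a e t)
  | Proj1 => Proj1
  | Proj2 => Proj2
  | Case u v => Case (msub a (elshift e) u) (msub a (elshift e) v)
  end.

Inductive red : term -> term -> Prop :=
| r_beta u v : red (App (Lam u) (ETm v)) (subst1 u v)
| r_pi1 t1 t2 : red (App (Pair t1 t2) Proj1) t1
| r_pi2 t1 t2 : red (App (Pair t1 t2) Proj2) t2
| r_case1 t u1 u2 : red (App (Inj1 t) (Case u1 u2)) (subst1 u1 t)
| r_case2 t u1 u2 : red (App (Inj2 t) (Case u1 u2)) (subst1 u2 t)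
| r_comm t u1 u2 e :
    red (App (App t (Case u1 u2)) e)
        (App t (Case (App u1 (elshift e)) (App u2 (elshift e))))
| r_mu t e : red (App (Mu t) e) (Mu (msub 0 (emshift e) t))
| c_lam t t' : red t t' -> red (Lam t) (Lam t')
| c_appl t t' e : red t t' -> red (App t e) (App t' e)
| c_appr t e e' : ered e e' -> red (App t e) (App t e')
| c_pairl t1 t1' t2 : red t1 t1' -> red (Pair t1 t2) (Pair t1' t2)
| c_pairr t1 t2 t2' : red t2 t2' -> red (Pair t1 t2) (Pair t1 t2')
| c_inj1 t t' : red t t' -> red (Inj1 t) (Inj1 t')
| c_inj2 t t' : red t t' -> red (Inj2 t) (Inj2 t')
| c_mu t t' : red t t' -> red (Mu t) (Mu t')
| c_mapp a t t' : red t t' -> red (MApp a t) (MApp a t')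
with ered : eterm -> eterm -> Prop :=
| c_etm t t' : red t t' -> ered (ETm t) (ETm t')
| c_casel u u' v : red u u' -> ered (Case u v) (Case u' v)
| c_caser u v v' : red v v' -> ered (Case u v) (Case u v').

Definition SN (t : term) : Prop :=
  ~ exists f : nat -> term, f 0 = t /\ forall n, red (f n) (f (S n)).

Definition tset := term -> Prop.

Definition Arr (K L : tset) : tset :=
  fun t => forall u, K u -> L (App t (ETm u)).

Definition Conj (K L : tset) : tset :=
  fun t => K (App t Proj1) /\ L (App t Proj2).

Definition Disj (K L : tset) : tset :=
  fun t => forall u v : term, SN u -> SN v ->
    (forall r, K r -> SN (subst1 u r)) ->
    (forall s, L s -> SN (subst1 v s)) ->
    SN (App t (Case u v)).

Inductive RC : tset -> Prop :=
| RC_N : RC SN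
| RC_arr K L : RC K -> RC L -> RC (Arr K L)
| RC_conj K L : RC K -> RC L -> RC (Conj K L)
| RC_disj K L : RC K -> RC L -> RC (Disj K L).

(* Main.v *)
Require Import Defs.
From Stdlib Require Import Classical ClassicalEpsilon.

Definition SNa (t : term) : Prop := Acc (fun a b => red b a) t.

Lemma SNa_SN t : SNa t -> SN t.
Proof.
  induction 1 as [t _ IH]. intros [f [H0 Hs]].
  apply (IH (f 1)). rewrite <- H0. apply Hs.
  exists (fun n => f (S n)). split; auto.
Qed.

Lemma not_SNa_step t : ~ SNa t -> exists t', red t t' /\ ~ SNa t'.
Proof.
  intros H. apply NNPP. intros H'. apply H. constructor. intros y Hy.
  apply NNPP. intros Hn. apply H'. exists y. auto.
Qed.

Lemma SN_SNa t : SN t -> SNa t.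
Proof.
  intros H. apply NNPP. intros Hn. apply H.
  assert (g : forall s : {t | ~ SNa t}, {t' | red (proj1_sig s) t' /\ ~ SNa t'}).
  { intros [s Hs]. apply constructive_indefinite_description.
    apply not_SNa_step. exact Hs. }
  pose (h := fun s : {t | ~ SNa t} =>
               exist (fun t => ~ SNa t) (proj1_sig (g s)) (proj2 (proj2_sig (g s)))).
  exists (fun n => proj1_sig (Nat.iter n h (exist _ t Hn))).
  split. reflexivity.
  intros n. simpl. apply (proj1 (proj2_sig (g _))).
Qed.

Lemma SNa_red t t' : SNa t -> red t t' -> SNa t'.
Proof. intros [H] Hr. apply H. exact Hr. Qed.

Inductive NE : term -> Prop :=
| ne_var x : NE (Var x)
| ne_app t u : NE t -> SNa u -> NE (App t (ETm u))
| ne_p1 t : NE t -> NE (App t Proj1)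
| ne_p2 t : NE t -> NE (App t Proj2).

Lemma NE_red t t' : NE t -> red t t' -> NE t'.
Proof.
  intros Hn. revert t'. induction Hn; intros t' Hr; inversion Hr; subst;
    try (inversion Hn; fail).
  - constructor; auto.
  - match goal with H : ered _ _ |- _ => inversion H; subst end.
    constructor; auto. eapply SNa_red; eauto.
  - constructor; auto.
  - match goal with H : ered _ _ |- _ => inversion H end.
  - constructor; auto.
  - match goal with H : ered _ _ |- _ => inversion H end.
Qed.


Lemma NE_SNa t : NE t -> SNa t.
Proof.
  induction 1 as [x|t u Hn IHNE H0|t H IHNE|t H IHNE].
  - constructor. intros y Hy. inversion Hy.
  - revert Hn u H0. induction IHNE as [t _ IHt]. intros Hn u H0.
    induction H0 as [u Hu IHu]. constructor. intros y Hy.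
    inversion Hy; subst; try (inversion Hn; fail).
    + apply IHt; auto. eapply NE_red; eauto. constructor; auto.
    + match goal with H : ered _ _ |- _ => inversion H; subst end.
      apply IHu; auto.
  - induction IHNE as [t _ IHt]. constructor. intros y Hy.
    inversion Hy; subst; try (inversion H; fail).
    + apply IHt; auto. eapply NE_red; eauto.
    + match goal with H : ered _ _ |- _ => inversion H end.
  - induction IHNE as [t _ IHt]. constructor. intros y Hy.
    inversion Hy; subst; try (inversion H; fail).
    + apply IHt; auto. eapply NE_red; eauto.
    + match goal with H : ered _ _ |- _ => inversion H end.
Qed.

Lemma NE_case t u v : NE t -> SNa t -> SNa u -> SNa v -> SNa (App t (Case u v)).
Proof.
  intros Hn Ht. revert Hn u v. induction Ht as [t _ IHt]. intros Hn u v Hu.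
  revert v. induction Hu as [u Hu IHu]. intros v Hv.
  induction Hv as [v Hv IHv]. constructor. intros y Hy.
  inversion Hy; subst; try (inversion Hn; fail).
  - apply IHt; auto. eapply NE_red; eauto. constructor; auto. constructor; auto.
  - match goal with H : ered _ _ |- _ => inversion H; subst end.
    + apply IHu; auto. constructor; auto.
    + apply IHv; auto.
Qed.

Lemma SNa_app_l s : SNa s -> forall t e, s = App t e -> SNa t.
Proof.
  induction 1 as [s _ IH]. intros t e ->. constructor. intros y Hy.
  apply (IH (App y e)) with (e := e); auto. constructor; auto.
Qed.

Lemma main (R : tset) : RC R -> (forall t, R t -> SNa t) /\ (forall t, NE t -> R t).
Proof.
  induction 1 as [|K L _ [K1 K2] _ [L1 L2]|K L _ [K1 K2] _ [L1 L2]|K L _ [K1 K2] _ [L1 L2]].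
  - split. apply SN_SNa. intros t H. apply SNa_SN, NE_SNa, H.
  - split.
    + intros t H. apply (SNa_app_l (App t (ETm (Var 0)))) with (e := ETm (Var 0)); [|reflexivity].
      apply L1, H, K2, ne_var.
    + intros t Hn u Hu. apply L2. constructor; auto.
  - split.
    + intros t [H _]. apply (SNa_app_l (App t Proj1)) with (e := Proj1); [|reflexivity]; auto.
    + intros t Hn. split; [apply K2|apply L2]; constructor; auto.
  - split.
    + intros t H. apply (SNa_app_l (App t (Case (Var 0) (Var 0)))) with (e := Case (Var 0) (Var 0)); [|reflexivity].
      apply SN_SNa. apply H; try (apply SNa_SN, NE_SNa, ne_var).
      * intros r Hr. apply SNa_SN, K1, Hr.
      * intros r Hr. apply SNa_SN, L1, Hr.
    + intros t Hn u v Hu Hv _ _. apply SNa_SN. apply NE_case; [exact Hn|apply NE_SNa, Hn|apply SN_SNa, Hu|apply SN_SNa, Hv].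
Qed.

Theorem lemma5 (R : tset) (HR : RC R) :
  (forall t : term, R t -> SN t) /\ (forall x : nat, R (Var x)).
Proof.
  destruct (main R HR) as [H1 H2]. split.
  - intros t H. apply SNa_SN, H1, H.
  - intros x. apply H2, ne_var.
Qed.
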